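(* Let $\mathbf P=(P_s)_{s\in\mathrm{SEQ}}$ and $\mathbf Q=(Q_s)_{s\in\mathrm{SEQ}}$ be normal Suslin schemes on $C$ consisting of $\mathbf m$-measurable sets, such that $\mathbf A(\mathbf P)$, $\mathbf A(\mathbf Q)$ and all $\mathbf A_f(\mathbf P)$, $\mathbf A_f(\mathbf Q)$ are measurable, and such that $\mathbf m(P_s\triangle Q_s)=0$ for all $s\in\mathrm{SEQ}$. Then $\mathbf m(\mathbf A(\mathbf P))=\mathbf m(\mathbf A(\mathbf Q))$.
   Context: $C=\{0,1\}^{\mathbb N}$, $\mathbf m$ the completed uniform product measure; $\triangle$ is symmetric difference. $\mathrm{SEQ}$ is the set of finite sequences of naturals, $\bar g(n)=\langle g(0),\dots,g(n-1)\rangle$. A Suslin scheme is a map $s\mapsto P_s\subseteq C$; normal means $t$ extends $s$ implies $P_t\subseteq P_s$. $\mathbf A(\mathbf P)=\bigcup_{g\in\mathbb N^{\mathbb N}}\bigcap_n P_{\bar g(n)}$; $\mathbf A_f(\mathbf P)=\bigcup_{g\le f}\bigcap_n P_{\bar g(n)}$ with pointwise $\le$. *)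

(* Defs.v *)
From Stdlib Require Import Reals Lra Lia List.
Import ListNotations.
Open Scope R_scope.

Definition Cantor := nat -> bool.
Definition cset := Cantor -> Prop.

Definition cyl (s : list bool) : cset :=
  fun x => forall i, (i < length s)%nat -> x i = nth i s false.

(** Weight of a (possibly absent) cylinder: m([s]) = 2^{-|s|}. *)
Definition wt (o : option (list bool)) : R :=
  match o with Some s => (/ 2) ^ length s | None => 0 end.

Definition cover_sum (A : cset) (r : R) : Prop :=
  exists c : nat -> option (list bool),
    (forall x, A x -> exists n s, c n = Some s /\ cyl s x) /\
    infinite_sum (fun n => wt (c n)) r.

Lemma wt_nonneg o : 0 <= wt o.
Proof. destruct o; simpl; [apply pow_le; lra | lra]. Qed.

Lemma psum_nonneg (f : nat -> R) N :
  (forall n, 0 <= f n) -> 0 <= sum_f_R0 f N.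
Proof.
  intros Hf; induction N; simpl; [apply Hf|].
  pose proof (Hf (S N)); lra.
Qed.

Lemma cover_sum_nonneg A r : cover_sum A r -> 0 <= r.
Proof.
  intros [c [_ H]].
  destruct (Rle_dec 0 r) as [h|h]; [exact h|].
  exfalso. destruct (H (- r)) as [N HN]; [lra|].
  specialize (HN N (le_n N)).
  pose proof (psum_nonneg (fun n => wt (c n)) N (fun n => wt_nonneg (c n))).
  unfold R_dist in HN. apply Rabs_def2 in HN. lra.
Qed.

Lemma cover_sum_exists A : exists r, cover_sum A r.
Proof.
  exists 1. exists (fun n => match n with O => Some [] | S _ => None end).
  split.
  - intros x _. exists O, []. split; [reflexivity|]. intros i Hi; simpl in Hi; lia.
  - intros eps He. exists O. intros n _.
    assert (E : sum_f_R0 (fun n => wt (match n with O => Some [] | S _ => None end)) n = 1).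
    { induction n; simpl; [lra|]. rewrite IHn; lra. }
    rewrite E. unfold R_dist. rewrite Rminus_diag, Rabs_R0. exact He.
Qed.

Definition neg_cover_sums (A : cset) : R -> Prop := fun y => cover_sum A (- y).

Lemma neg_cover_sums_bound A : bound (neg_cover_sums A).
Proof.
  exists 0. intros y Hy. apply cover_sum_nonneg in Hy. lra.
Qed.

Lemma neg_cover_sums_ne A : exists y, neg_cover_sums A y.
Proof.
  destruct (cover_sum_exists A) as [r Hr]. exists (- r).
  unfold neg_cover_sums. rewrite Ropp_involutive. exact Hr.
Qed.

(** Outer measure m*(A) = inf of total weights of countable cylinder covers. *)
Definition mstar (A : cset) : R :=
  - proj1_sig (completeness (neg_cover_sums A)
                 (neg_cover_sums_bound A) (neg_cover_sums_ne A)).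

(** Carathéodory measurability w.r.t. m*; these are exactly the sets measurable
    for the completed uniform product measure m, and m = m* on them. *)
Definition measurable (A : cset) : Prop :=
  forall E : cset,
    mstar E = mstar (fun x => E x /\ A x) + mstar (fun x => E x /\ ~ A x).

Definition m (A : cset) : R := mstar A.

Definition symdiff (A B : cset) : cset :=
  fun x => (A x /\ ~ B x) \/ (B x /\ ~ A x).

Definition suslin_scheme := list nat -> cset.

Definition normal (P : suslin_scheme) : Prop :=
  forall s t : list nat, (exists u, t = s ++ u) -> forall x, P t x -> P s x.

Definition gbar (g : nat -> nat) (n : nat) : list nat := map g (seq 0 n).

Definition suslinA (P : suslin_scheme) : cset :=
  fun x => exists g : nat -> nat, forall n, P (gbar g n) x.

Definition suslinA_f (f : nat -> nat) (P : suslin_scheme) : cset :=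
  fun x => exists g : nat -> nat, (forall n, (g n <= f n)%nat) /\ forall n, P (gbar g n) x.

(* Main.v *)
Require Import Defs.
From Stdlib Require Import Reals List.
From Stdlib Require Import Lra Lia Arith Cantor Classical ClassicalEpsilon.
Import ListNotations.
Open Scope R_scope.

Fixpoint psum (a : nat -> R) (n : nat) : R :=
  match n with O => 0 | S n => psum a n + a n end.

Lemma psum_sum a n : sum_f_R0 a n = psum a (S n).
Proof. induction n; simpl in *; [lra|]. rewrite IHn. simpl. lra. Qed.

Lemma psum_nonneg' a n : (forall k, 0 <= a k) -> 0 <= psum a n.
Proof. intros H; induction n; simpl; [lra|]. specialize (H n); lra. Qed.

Lemma psum_mono a n p : (forall k, 0 <= a k) -> (n <= p)%nat -> psum a n <= psum a p.
Proof.
  intros H Hle; induction Hle; [lra|]. simpl. specialize (H m); lra.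
Qed.

Lemma psum_ext a b n : (forall k, a k = b k) -> psum a n = psum b n.
Proof. intros H; induction n; simpl; [lra|]. rewrite IHn, H; lra. Qed.

Lemma psum_split a n :
  psum a (2 * n)%nat = psum (fun k => a (2 * k)%nat) n + psum (fun k => a (S (2 * k))%nat) n.
Proof.
  induction n; [simpl; lra|].
  replace (2 * S n)%nat with (S (S (2 * n))) by lia.
  cbn [psum]. rewrite IHn. lra.
Qed.

Lemma isum_le a r N : (forall k, 0 <= a k) -> infinite_sum a r -> psum a N <= r.
Proof.
  intros Hn Hs. destruct (Rle_dec (psum a N) r) as [h|h]; [exact h|].
  exfalso. destruct (Hs (psum a N - r)) as [M HM]; [lra|].
  specialize (HM (Nat.max M N) (Nat.le_max_l _ _)).
  rewrite psum_sum in HM.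
  assert (psum a N <= psum a (S (Nat.max M N))) by (apply psum_mono; [exact Hn| lia]).
  unfold Rdist in HM. apply Rabs_def2 in HM. lra.
Qed.

Lemma bounded_isum a B : (forall k, 0 <= a k) -> (forall N, psum a N <= B) ->
  exists r, infinite_sum a r /\ r <= B.
Proof.
  intros Hn HB.
  destruct (growing_cv (sum_f_R0 a)) as [l Hl].
  - intros n. rewrite !psum_sum. simpl. specialize (Hn (S n)). simpl in Hn. lra.
  - exists B. intros x [i ->]. rewrite psum_sum. apply HB.
  - exists l. split; [exact Hl|].
    destruct (Rle_dec l B) as [h|h]; [exact h|]. exfalso.
    destruct (Hl (l - B)) as [M HM]; [lra|].
    specialize (HM M (le_n M)). rewrite psum_sum in HM.
    specialize (HB (S M)). unfold Rdist in HM. apply Rabs_def2 in HM. lra.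
Qed.

Lemma mstar_le A r : cover_sum A r -> mstar A <= r.
Proof.
  intros H. unfold mstar.
  destruct (completeness _ _ _) as [l [Hub Hlub]]. simpl.
  assert (-r <= l). { apply Hub. unfold neg_cover_sums. rewrite Ropp_involutive. exact H. }
  lra.
Qed.

Lemma mstar_approx A eps : eps > 0 -> exists r, cover_sum A r /\ r < mstar A + eps.
Proof.
  intros He. apply NNPP. intros Hno.
  unfold mstar in Hno.
  destruct (completeness _ _ _) as [l [Hub Hlub]]. simpl in Hno.
  assert (l <= l - eps); [|lra].
  apply Hlub. intros y Hy. unfold neg_cover_sums in Hy.
  destruct (Rle_dec y (l - eps)) as [h|h]; [exact h|].
  exfalso. apply Hno. exists (- y). split; [exact Hy|]. lra.
Qed.

Definition cover := nat -> option (list bool).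

Fixpoint dd (f : nat) (c : nat -> cover) (j : nat) : option (list bool) :=
  match f with
  | O => None
  | S f' => if Nat.even j then c O (Nat.div2 j) else dd f' (fun k => c (S k)) (Nat.div2 j)
  end.

Lemma dd_stable f1 : forall f2 c j, (j < f1)%nat -> (j < f2)%nat -> dd f1 c j = dd f2 c j.
Proof.
  induction f1; intros f2 c j H1 H2; [lia|]. destruct f2; [lia|]. simpl.
  destruct (Nat.even j) eqn:E; [reflexivity|].
  assert (j <> 0%nat) by (intros ->; discriminate).
  pose proof (Nat.lt_div2 j ltac:(lia)).
  apply IHf1; lia.
Qed.

Lemma dd_S f c j : dd (S f) c j =
  if Nat.even j then c O (Nat.div2 j) else dd f (fun k => c (S k)) (Nat.div2 j).
Proof. reflexivity. Qed.

Definition d (c : nat -> cover) (j : nat) := dd (S j) c j.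

Lemma d_even c n : d c (2 * n) = c O n.
Proof. unfold d. rewrite dd_S. rewrite Nat.even_even, Nat.div2_double. reflexivity. Qed.

Lemma d_odd c n : d c (S (2 * n)) = d (fun k => c (S k)) n.
Proof.
  unfold d. rewrite dd_S.
  replace (Nat.even (S (2 * n))) with false
    by (replace (S (2*n)) with (2*n+1)%nat by lia; rewrite Nat.even_odd; reflexivity).
  rewrite Nat.div2_succ_double. apply dd_stable; lia.
Qed.

Lemma d_hit k : forall n c, exists j, d c j = c k n.
Proof.
  induction k; intros n c.
  - exists (2 * n)%nat. apply d_even.
  - destruct (IHk n (fun k => c (S k))) as [j Hj]. exists (S (2 * j)).
    rewrite d_odd. exact Hj.
Qed.

Lemma d_bound p : forall eps c,
  (forall k M, psum (fun n => wt (c k n)) M <= eps / 2 ^ (S k)) ->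
  psum (fun j => wt (d c j)) (2 ^ p) <= eps.
Proof.
  induction p; intros eps c H.
  - simpl. pose proof (H O 1%nat). simpl in H0.
    pose proof (wt_nonneg (c O O)).
    replace (d c 0%nat) with (c O O) by (apply (d_even c 0%nat)). lra.
  - rewrite Nat.pow_succ_r', psum_split.
    rewrite (psum_ext _ (fun k => wt (c O k))) by (intros; cbv beta; rewrite d_even; reflexivity).
    rewrite (psum_ext (fun k => wt (d c (S (2 * k)))) (fun k => wt (d (fun k => c (S k)) k)))
      by (intros; rewrite d_odd; reflexivity).
    pose proof (H O (2 ^ p)%nat).
    replace (eps / 2 ^ 1) with (eps / 2) in H0 by (simpl; field).
    assert (psum (fun k => wt (d (fun k => c (S k)) k)) (2 ^ p) <= eps / 2).
    { apply IHp. intros k M. pose proof (H (S k) M).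
      assert (2 ^ k > 0) by (apply pow_lt; lra).
      replace (eps / 2 / 2 ^ S k) with (eps / 2 ^ S (S k)); [exact H1|].
      simpl. field. lra. }
    lra.
Qed.

Fixpoint dec (f j : nat) : list nat :=
  match f with
  | O => []
  | S f' => match j with O => [] | S j' => let (a, b) := of_nat j' in a :: dec f' b end
  end.

Fixpoint enc (s : list nat) : nat :=
  match s with [] => O | a :: s => S (to_nat (a, enc s)) end.

Lemma dec_enc s : forall f, (enc s < f)%nat -> dec f (enc s) = s.
Proof.
  induction s as [|a s IH]; intros f H; destruct f; cbn [enc dec] in *; try lia; try reflexivity.
  rewrite cancel_of_to. f_equal. apply IH.
  pose proof (to_nat_non_decreasing a (enc s)). lia.
Qed.

Definition E (j : nat) := dec (S j) j.
Lemma E_enc s : E (enc s) = s.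
Proof. unfold E. apply dec_enc. lia. Qed.

Lemma main (P Q D : suslin_scheme) :
  (forall s, mstar (D s) = 0) ->
  (forall s x, P s x -> ~ Q s x -> D s x) ->
  mstar (suslinA P) <= mstar (suslinA Q).
Proof.
  intros HD Hinc.
  assert (Hall : forall eps, eps > 0 -> mstar (suslinA P) <= mstar (suslinA Q) + 2 * eps).
  2:{ destruct (Rle_dec (mstar (suslinA P)) (mstar (suslinA Q))) as [h|h]; [exact h|].
      exfalso. specialize (Hall ((mstar (suslinA P) - mstar (suslinA Q)) / 4)).
      assert (H := Hall ltac:(lra)). lra. }
  intros eps He.
  destruct (mstar_approx (suslinA Q) eps He) as [rQ [[cQ [HcQ HsQ]] HrQ]].
  assert (Hk : forall k, exists c : cover,
    (forall x, D (E k) x -> exists n s, c n = Some s /\ cyl s x) /\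
    forall M, psum (fun n => wt (c n)) M <= eps / 2 ^ (S k)).
  { intros k. assert (Hp : eps / 2 ^ S k > 0).
    { apply Rdiv_lt_0_compat; [lra| apply pow_lt; lra]. }
    destruct (mstar_approx (D (E k)) _ Hp) as [r [[c [Hc Hs]] Hr]].
    rewrite HD in Hr. exists c. split; [exact Hc|].
    intros M. pose proof (isum_le _ _ M (fun n => wt_nonneg (c n)) Hs). lra. }
  set (C := fun k => proj1_sig (constructive_indefinite_description _ (Hk k))).
  assert (HC : forall k, (forall x, D (E k) x -> exists n s, C k n = Some s /\ cyl s x) /\
    forall M, psum (fun n => wt (C k n)) M <= eps / 2 ^ (S k)).
  { intros k. unfold C. destruct (constructive_indefinite_description _ (Hk k)). exact a. }
  set (e := fun j => if Nat.even j then cQ (Nat.div2 j) else d C (Nat.div2 j)).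
  assert (He2 : forall n, e (2 * n)%nat = cQ n).
  { intros n. unfold e. rewrite Nat.even_even, Nat.div2_double. reflexivity. }
  assert (He1 : forall n, e (S (2 * n)) = d C n).
  { intros n. unfold e.
    replace (Nat.even (S (2 * n))) with false
      by (replace (S (2*n)) with (2*n+1)%nat by lia; rewrite Nat.even_odd; reflexivity).
    rewrite Nat.div2_succ_double. reflexivity. }
  assert (Hdb : forall N, psum (fun j => wt (d C j)) N <= eps).
  { intros N. apply Rle_trans with (psum (fun j => wt (d C j)) (2 ^ N)).
    - apply psum_mono; [intros; apply wt_nonneg|].
      pose proof (Nat.pow_gt_lin_r 2 N ltac:(lia)). lia.
    - apply d_bound. intros k M. apply (HC k). }
  destruct (bounded_isum (fun j => wt (e j)) (rQ + eps)) as [r [Hr Hrle]].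
  - intros; apply wt_nonneg.
  - intros N. apply Rle_trans with (psum (fun j => wt (e j)) (2 * N)).
    + apply psum_mono; [intros; apply wt_nonneg| lia].
    + rewrite psum_split.
      rewrite (psum_ext _ (fun k => wt (cQ k))) by (intros; rewrite He2; reflexivity).
      rewrite (psum_ext (fun k => wt (e (S (2 * k)))) (fun k => wt (d C k))) by (intros; rewrite He1; reflexivity).
      pose proof (isum_le _ _ N (fun n => wt_nonneg (cQ n)) HsQ).
      specialize (Hdb N). lra.
  - assert (Hcov : cover_sum (suslinA P) r).
    { exists e. split; [|exact Hr].
      intros x [g Hg].
      destruct (classic (suslinA Q x)) as [HQ|HQ].
      - destruct (HcQ x HQ) as [n [s [Hn Hs]]].
        exists (2 * n)%nat, s. rewrite He2. auto.
      - assert (exists n, ~ Q (gbar g n) x) as [n Hn].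
        { apply NNPP. intros Hno. apply HQ. exists g. intros n.
          apply NNPP. intros Hq. apply Hno. exists n. exact Hq. }
        pose proof (Hinc _ _ (Hg n) Hn) as HDx.
        rewrite <- (E_enc (gbar g n)) in HDx.
        destruct (proj1 (HC (enc (gbar g n))) x HDx) as [n' [s [Hn' Hs]]].
        destruct (d_hit (enc (gbar g n)) n' C) as [j Hj].
        exists (S (2 * j)), s. rewrite He1, Hj. auto. }
    pose proof (mstar_le _ _ Hcov). lra.
Qed.

Theorem lemma5 (P Q : suslin_scheme) :
  normal P -> normal Q ->
  (forall s, measurable (P s)) -> (forall s, measurable (Q s)) ->
  measurable (suslinA P) -> measurable (suslinA Q) ->
  (forall f, measurable (suslinA_f f P)) -> (forall f, measurable (suslinA_f f Q)) ->
  (forall s, m (symdiff (P s) (Q s)) = 0) ->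
  m (suslinA P) = m (suslinA Q).
Proof.
  intros _ _ _ _ _ _ _ _ H. unfold m in *. apply Rle_antisym.
  - apply (main P Q (fun s => symdiff (P s) (Q s))); [exact H|].
    intros s x Hp Hq. left. auto.
  - apply (main Q P (fun s => symdiff (P s) (Q s))); [exact H|].
    intros s x Hq Hp. right. auto.
Qed.
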